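(* Let $U$ take values in a finite set $\mathcal{U}$ with $|\mathcal{U}|=L\ge2$ and let $Q$ take values in a finite alphabet. Then \[K^{(L)}(U|Q)\le1-\frac{2}{L-1}P_e^{(L)}(U|Q).\]
   Context: With $P_Q$ and $P_{U|Q}$ the marginal and conditional laws: $K^{(L)}(U|Q)=\sum_q\sum_{u'\ne u}\frac{P_Q(q)}{L-1}\cdot\frac{|P_{U|Q}(u|q)-P_{U|Q}(u'|q)|}{2}$, where the inner sum ranges over ordered pairs $(u,u')\in\mathcal{U}^2$ with $u'\ne u$; and $P_e^{(L)}(U|Q)=\sum_qP_Q(q)\big(1-\max_uP_{U|Q}(u|q)\big)$. *)

(* Defs.v *)
From HB Require Import structures.
From mathcomp Require Import all_boot all_order all_algebra.
Set Implicit Arguments. Unset Strict Implicit. Unset Printing Implicit Defensive.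
Import Order.TTheory GRing.Theory Num.Theory.
Local Open Scope ring_scope.

Definition is_joint_pmf (R : realFieldType) (U Q : finType) (P : U -> Q -> R) :=
  (forall u q, 0 <= P u q) /\ \sum_(u : U) \sum_(q : Q) P u q = 1.

Definition PQ (R : realFieldType) (U Q : finType) (P : U -> Q -> R) (q : Q) : R :=
  \sum_(u : U) P u q.

(* conditional law of U given Q (set to 0 when P_Q(q) = 0; such q carry
   weight P_Q(q) = 0 in every formula below) *)
Definition PUgQ (R : realFieldType) (U Q : finType) (P : U -> Q -> R) (u : U) (q : Q) : R :=
  P u q / PQ P q.

Definition KL (R : realFieldType) (U Q : finType) (P : U -> Q -> R) : R :=
  \sum_(q : Q) \sum_(u : U) \sum_(u' : U | u' != u)
     (PQ P q / (#|U|%:R - 1)) * (`|PUgQ P u q - PUgQ P u' q| / 2).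

(* P_e^{(L)}(U|Q); the max of the (nonnegative) conditional probabilities
   is taken as \big[Num.max/0] over the nonempty set U *)
Definition PeL (R : realFieldType) (U Q : finType) (P : U -> Q -> R) : R :=
  \sum_(q : Q) PQ P q * (1 - \big[Num.max/0]_(u : U) PUgQ P u q).

(* Main.v *)
Require Import Defs.
From mathcomp Require Import all_boot all_order all_algebra.
From mathcomp Require Import ring lra.
Import Order.TTheory GRing.Theory Num.Theory.
Local Open Scope ring_scope.

Lemma absmin (R : realFieldType) (a b : R) : `|a - b| / 2 = (a + b) / 2 - Num.min a b.
Proof.
have [h|h] := leP a b.
  rewrite (ler0_norm (_ : a - b <= 0)); last by rewrite subr_le0.
  lra.
rewrite (gtr0_norm (_ : 0 < a - b)); last by rewrite subr_gt0.
lra.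
Qed.

Lemma key (R : realFieldType) (U : finType) (c : U -> R) :
  (forall u, 0 <= c u) -> \sum_u c u = 1 -> (0 < #|U|)%N ->
  \sum_(u : U) \sum_(v : U | v != u) `|c u - c v| / 2
   <= (#|U|%:R - 1) - 2 * (1 - \big[Num.max/0]_(u : U) c u).
Proof.
move=> c0 c1 U0.
have rest : forall u, \sum_(v | v != u) c v = 1 - c u.
  by move=> u; rewrite -c1 [in RHS](bigD1 u) //=; ring.
have /card_gt0P [j _] := U0.
have [us _ hM] := @eq_bigmax _ _ U (0:R) j xpredT c isT (fun i _ => c0 i).
rewrite hM.
have le_us : forall u, c u <= c us by move=> u; rewrite -hM; apply: le_bigmax.
under eq_bigr => u _ do under eq_bigr => v _ do rewrite absmin.
rewrite (eq_bigr (fun u => \sum_(v | v != u) (c u + c v) / 2 - \sum_(v | v != u) Num.min (c u) (c v))); last first.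
  by move=> u _; rewrite -sumrB.
rewrite sumrB.
have T : \sum_(u:U) \sum_(v | v != u) (c u + c v) / 2 = #|U|%:R - 1.
  have E : forall u, \sum_(v | v != u) (c u + c v) / 2 = ((#|U|%:R - 2) * c u + 1) / 2.
    move=> u; rewrite -mulr_suml big_split /= sumr_const.
    rewrite rest.
    rewrite cardC1 -mulr_natr.
    have -> : (#|U|%:R : R) = (#|U|.-1)%:R + 1 by rewrite -[in LHS](prednK U0) -addn1 natrD.
    lra.
  under eq_bigr => u _ do rewrite E.
  rewrite -mulr_suml big_split /= sumr_const -mulr_sumr c1 /=.
  rewrite (_ : #|xpredT| = #|U|); last by apply: eq_card.
  lra.
have Mn : 2 * (1 - c us) <= \sum_(u:U) \sum_(v | v != u) Num.min (c u) (c v).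
  rewrite (bigD1 us) //=.
  have -> : \sum_(v | v != us) Num.min (c us) (c v) = 1 - c us.
    rewrite -rest; apply: eq_bigr => v _.
    by rewrite min_r.
  have : 1 - c us <= \sum_(u | u != us) \sum_(v | v != u) Num.min (c u) (c v).
    rewrite -rest; apply: ler_sum => u hu.
    rewrite (bigD1 us) 1?eq_sym //= min_l //.
    rewrite lerDl; apply: sumr_ge0 => v _.
    by rewrite le_min !c0.
  lra.
rewrite T; lra.
Qed.

Theorem lemma10 (R : realFieldType) (U Q : finType) (P : U -> Q -> R) :
  is_joint_pmf P -> (2 <= #|U|)%N ->
  KL P <= 1 - 2 / (#|U|%:R - 1) * PeL P.
Proof.
move=> [P0 P1] U2.
have L1 : 0 < #|U|%:R - 1 :> R.
  rewrite subr_gt0 (_ : 1 = 1%:R) // ltr_nat; exact: leq_trans U2.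
have sp : \sum_q PQ P q = 1 by rewrite /PQ exchange_big.
rewrite /KL /PeL [X in _ <= X - _](esym sp) mulr_sumr -sumrB; apply: ler_sum => q _.
under eq_bigr do rewrite -mulr_sumr; rewrite -mulr_sumr.
have p0 : 0 <= PQ P q by apply: sumr_ge0.
have [pz|pn] := eqVneq (PQ P q) 0.
  by rewrite pz !mul0r mulr0 subrr.
have c0 : forall u, 0 <= PUgQ P u q by move=> u; apply: divr_ge0.
have c1 : \sum_u PUgQ P u q = 1 by rewrite /PUgQ -mulr_suml divff.
have U0 : (0 < #|U|)%N by exact: leq_trans U2.
have K := @key _ _ _ c0 c1 U0.
have pL : 0 <= PQ P q / (#|U|%:R - 1) by apply: divr_ge0 => //; apply: ltW.
apply: le_trans (ler_wpM2l pL K) _.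
rewrite le_eqVlt; apply/orP; left; apply/eqP; field.
by rewrite lt0r_neq0.
Qed.
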